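(* Let $F$, $H$, $X$, $\Omega$, $Q$ and the sequences generated by the IneIREG method be as described in the context, and suppose $H$ is $\mu$-strongly monotone for some $\mu>0$. Then for all $x\in X$ and $k\ge0$, $$\|w_k-x\|^2-\|x_{k+1}-x\|^2\ge(1-\lambda_k^2L_k^2)\|w_k-y_k\|^2+2\lambda_k\langle F(x),y_k-x\rangle+2\lambda_k\eta_k\langle H(x),y_k-x\rangle+2\lambda_k\eta_k\mu\|y_k-x\|^2,$$ where $L_k:=L_F+\eta_kL_H$.
   Context: Work in $\mathbb{R}^n$ with Euclidean inner product $\langle\cdot,\cdot\rangle$ and norm $\|\cdot\|$. The maps $F\colon \mathrm{Dom}\,F\to\mathbb{R}^n$ and $H\colon\mathrm{Dom}\,H\to\mathbb{R}^n$ are monotone and Lipschitz continuous with constants $L_F>0$ and $L_H>0$; $H$ is $\mu$-strongly monotone means $\langle H(x)-H(y),x-y\rangle\ge\mu\|x-y\|^2$ for all $x,y\in\mathrm{Dom}\,H$. $X$ is a nonempty compact convex set and $\Omega$ a nonempty closed convex set with $X\subset\Omega\subset\mathrm{Dom}\,F\cap\mathrm{Dom}\,H$; $P_X,P_\Omega$ denote orthogonal projections. $Q:=\{x\in X:\langle F(x),y-x\rangle\ge0\ \forall y\in X\}$ is assumed nonempty. IneIREG method: start with $x_0=x_{-1}\in X$; for $k=0,1,\dots$, with parameters $\alpha_k\ge0$, $\lambda_k>0$, $\eta_k>0$, set $w_k=x_k+\alpha_k(x_k-x_{k-1})$, $w'_k=P_\Omega(w_k)$, $y_k=P_X\big(w_k-\lambda_k(F(w'_k)+\eta_kH(w'_k))\big)$,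 $x_{k+1}=P_X\big(w_k-\lambda_k(F(y_k)+\eta_kH(y_k))\big)$. *)

(* Defs.v *)
From HB Require Import structures.
From mathcomp Require Import all_boot all_order all_algebra.
From mathcomp Require Import all_classical all_reals all_analysis.
From mathcomp Require Import matrix_topology matrix_normedtype.
Import numFieldNormedType.Exports.
Set Implicit Arguments. Unset Strict Implicit. Unset Printing Implicit Defensive.
Import Order.TTheory GRing.Theory Num.Theory.
Local Open Scope ring_scope.
Local Open Scope classical_set_scope.

Definition vdot (R : realType) (n : nat) (u v : 'rV[R]_n) : R :=
  \sum_(i < n) u ord0 i * v ord0 i.

Definition vnorm (R : realType) (n : nat) (u : 'rV[R]_n) : R :=
  Num.sqrt (vdot u u).

Definition vconvex_set (R : realType) (n : nat) (C : set 'rV[R]_n) : Prop :=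
  forall x y (t : R), C x -> C y -> 0 <= t <= 1 -> C ((1 - t) *: x + t *: y).

Definition op_monotone_on (R : realType) (n : nat) (D : set 'rV[R]_n)
    (G : 'rV[R]_n -> 'rV[R]_n) : Prop :=
  forall x y, D x -> D y -> 0 <= vdot (G x - G y) (x - y).

Definition op_strongly_monotone_on (R : realType) (n : nat) (D : set 'rV[R]_n)
    (G : 'rV[R]_n -> 'rV[R]_n) (mu : R) : Prop :=
  forall x y, D x -> D y -> mu * (vnorm (x - y)) ^+ 2 <= vdot (G x - G y) (x - y).

Definition op_lipschitz_on (R : realType) (n : nat) (D : set 'rV[R]_n)
    (G : 'rV[R]_n -> 'rV[R]_n) (L : R) : Prop :=
  forall x y, D x -> D y -> vnorm (G x - G y) <= L * vnorm (x - y).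

Definition is_proj_onto (R : realType) (n : nat) (C : set 'rV[R]_n)
    (P : 'rV[R]_n -> 'rV[R]_n) : Prop :=
  forall y, C (P y) /\ forall z, C z -> vnorm (y - P y) <= vnorm (y - z).

Definition VIsol (R : realType) (n : nat) (F : 'rV[R]_n -> 'rV[R]_n)
    (X : set 'rV[R]_n) : set 'rV[R]_n :=
  [set x | X x /\ forall y, X y -> 0 <= vdot (F x) (y - x)].

(* Main.v *)
Require Import Defs.
From HB Require Import structures.
From mathcomp Require Import all_boot all_order all_algebra.
From mathcomp Require Import all_classical all_reals all_analysis.
From mathcomp Require Import matrix_topology matrix_normedtype.
From mathcomp Require Import ring lra.
Import numFieldNormedType.Exports.
Import Order.TTheory GRing.Theory Num.Theory.
Local Open Scope ring_scope.
Local Open Scope classical_set_scope.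
Set Implicit Arguments. Unset Strict Implicit.

Section VD.
Variables (R : realType) (n : nat).
Implicit Types (u v w : 'rV[R]_n) (a : R).

Lemma vdotC u v : vdot u v = vdot v u.
Proof. by rewrite /vdot; apply: eq_bigr => i _; rewrite mulrC. Qed.
Lemma vdotDl u v w : vdot (u + v) w = vdot u w + vdot v w.
Proof. by rewrite /vdot -big_split; apply: eq_bigr => i _; rewrite mxE mulrDl. Qed.
Lemma vdotZl a u v : vdot (a *: u) v = a * vdot u v.
Proof. by rewrite /vdot mulr_sumr; apply: eq_bigr => i _; rewrite mxE mulrA. Qed.
Lemma vdotNl u v : vdot (- u) v = - vdot u v.
Proof. by rewrite /vdot -sumrN; apply: eq_bigr => i _; rewrite mxE mulNr. Qed.
Lemma vdotBl u v w : vdot (u - v) w = vdot u w - vdot v w.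
Proof. by rewrite vdotDl vdotNl. Qed.
Lemma vdotDr u v w : vdot w (u + v) = vdot w u + vdot w v.
Proof. by rewrite vdotC vdotDl !(vdotC w). Qed.
Lemma vdotZr a u v : vdot v (a *: u) = a * vdot v u.
Proof. by rewrite vdotC vdotZl (vdotC v). Qed.
Lemma vdotNr u v : vdot v (- u) = - vdot v u.
Proof. by rewrite vdotC vdotNl (vdotC v). Qed.
Lemma vdotBr u v w : vdot w (u - v) = vdot w u - vdot w v.
Proof. by rewrite vdotDr vdotNr. Qed.
Lemma vdot_ge0 u : 0 <= vdot u u.
Proof. by rewrite /vdot; apply: sumr_ge0 => i _; rewrite -expr2 sqr_ge0. Qed.
Lemma vnorm2 u : vnorm u ^+ 2 = vdot u u.
Proof. by rewrite /vnorm sqr_sqrtr // vdot_ge0. Qed.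
Lemma vnorm_ge0 u : 0 <= vnorm u.
Proof. exact: sqrtr_ge0. Qed.

Lemma vdot_subsq u v : vdot (u - v) (u - v) = vdot u u - 2 * vdot u v + vdot v v.
Proof. rewrite !(vdotBl, vdotBr) (vdotC v u); ring. Qed.

Lemma vnorm_le u v : vnorm u <= vnorm v -> vdot u u <= vdot v v.
Proof. by rewrite /vnorm ler_sqrt // vdot_ge0. Qed.

Lemma lip_sq L u v : vnorm u <= L * vnorm v -> vdot u u <= L ^+ 2 * vdot v v.
Proof.
move=> h; rewrite -!vnorm2.
have h0 := vnorm_ge0 u; have h1 := vnorm_ge0 v.
have h2 : 0 <= L * vnorm v by apply: le_trans h.
nra.
Qed.

Lemma young u v a b : 2 * a * b * vdot u v <= a ^+ 2 * vdot u u + b ^+ 2 * vdot v v.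
Proof.
have := vdot_ge0 (a *: u - b *: v).
rewrite !(vdotBl, vdotBr, vdotZl, vdotZr) (vdotC v u).
nra.
Qed.

Lemma proj_vi (C : set 'rV[R]_n) P : vconvex_set C -> is_proj_onto C P ->
  forall d u, C u -> vdot (d - P d) (u - P d) <= 0.
Proof.
move=> cvx hP d u Cu.
have [Cp Hmin] := hP d.
set p := P d in Cp Hmin *.
set c := vdot (d - p) (u - p).
set N := vdot (u - p) (u - p).
have N0 : 0 <= N by apply: vdot_ge0.
rewrite leNgt; apply/negP => c0.
set t := c / (c + N).
have cN : 0 < c + N by lra.
have ht : t * (c + N) = c by rewrite /t mulfVK // gt_eqF.
have t0 : 0 < t by rewrite /t divr_gt0.
have t1 : t <= 1 by rewrite /t ler_pdivrMr // mul1r; lra.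
have := Hmin _ (cvx p u t Cp Cu ((introT andP (conj (ltW t0) t1)))).
move/vnorm_le.
have -> : d - ((1 - t) *: p + t *: u) = (d - p) - t *: (u - p).
  by apply/rowP => i; rewrite !mxE; ring.
rewrite (vdot_subsq (d - p) (t *: (u - p))) !(vdotZl, vdotZr) -/c -/N.
move=> h.
have h2 : 0 <= t * (t * N - 2 * c) by nra.
have h3 : 0 <= t * N - 2 * c.
  by move: h2; rewrite pmulr_rge0.
nra.
Qed.

Definition sdot u v := 2^-1 * (vdot u v + vdot v u).
Lemma vdot_sdot u v : vdot u v = sdot u v.
Proof. rewrite /sdot (vdotC v u); lra. Qed.
Lemma sdotDl u v w : sdot (u + v) w = sdot u w + sdot v w.
Proof. rewrite -!vdot_sdot; exact: vdotDl. Qed.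
Lemma sdotDr u v w : sdot w (u + v) = sdot w u + sdot w v.
Proof. rewrite -!vdot_sdot; exact: vdotDr. Qed.
Lemma sdotNl u v : sdot (- u) v = - sdot u v.
Proof. rewrite -!vdot_sdot; exact: vdotNl. Qed.
Lemma sdotNr u v : sdot v (- u) = - sdot v u.
Proof. rewrite -!vdot_sdot; exact: vdotNr. Qed.
Lemma sdotZl a u v : sdot (a *: u) v = a * sdot u v.
Proof. rewrite -!vdot_sdot; exact: vdotZl. Qed.
Lemma sdotZr a u v : sdot v (a *: u) = a * sdot v u.
Proof. rewrite -!vdot_sdot; exact: vdotZr. Qed.

Lemma combo (p q d : 'rV[R]_n) (LF LH e : R) : 0 < LF -> 0 < LH -> 0 <= e ->
  vdot p p <= LF ^+ 2 * vdot d d -> vdot q q <= LH ^+ 2 * vdot d d ->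
  vdot (p + e *: q) (p + e *: q) <= (LF + e * LH) ^+ 2 * vdot d d.
Proof.
move=> hF hH he hp hq.
have hy := young p q LH LF.
have hd := vdot_ge0 d.
rewrite vdotDl !vdotDr !(vdotZl, vdotZr) (vdotC q p).
have hpq : vdot p q <= LF * LH * vdot d d.
  have h : LF * LH * (2 * vdot p q) <= LF * LH * (2 * (LF * LH * vdot d d)) by nra.
  have hpos : 0 < LF * LH by apply: mulr_gt0.
  rewrite ler_pM2l // in h; lra.
have hq0 := vdot_ge0 q.
have h1 : e * vdot p q <= e * (LF * LH * vdot d d) by apply: ler_wpM2l.
have h2 : e * (e * vdot q q) <= e * (e * (LH ^+ 2 * vdot d d)).
  by apply: ler_wpM2l => //; apply: ler_wpM2l.
nra.
Qed.

Lemma proj_ineq (a b : 'rV[R]_n) : vdot a b <= 0 -> vdot b b <= vdot (a - b) (a - b).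
Proof. move=> h; rewrite vdot_subsq; have := vdot_ge0 a; lra. Qed.
End VD.
Theorem proposition4p2 (R : realType) (n : nat)
  (F H : 'rV[R]_n -> 'rV[R]_n) (DomF DomH X Omega : set 'rV[R]_n)
  (LF LH mu : R) (PX PO : 'rV[R]_n -> 'rV[R]_n)
  (alpha lam eta : nat -> R) (x y w w' : nat -> 'rV[R]_n) :
  op_monotone_on DomF F -> op_monotone_on DomH H ->
  0 < LF -> 0 < LH -> op_lipschitz_on DomF F LF -> op_lipschitz_on DomH H LH ->
  0 < mu -> op_strongly_monotone_on DomH H mu ->
  X !=set0 -> compact X -> vconvex_set X ->
  Omega !=set0 -> closed Omega -> vconvex_set Omega ->
  X `<=` Omega -> Omega `<=` DomF `&` DomH ->
  is_proj_onto X PX -> is_proj_onto Omega PO ->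
  VIsol F X !=set0 ->
  (forall k, 0 <= alpha k) -> (forall k, 0 < lam k) -> (forall k, 0 < eta k) ->
  X (x 0%N) ->
  (* x_{-1} = x_0 is encoded by x (k.-1) with 0.-1 = 0 *)
  (forall k, w k = x k + alpha k *: (x k - x k.-1)) ->
  (forall k, w' k = PO (w k)) ->
  (forall k, y k = PX (w k - lam k *: (F (w' k) + eta k *: H (w' k)))) ->
  (forall k, x k.+1 = PX (w k - lam k *: (F (y k) + eta k *: H (y k)))) ->
  forall (z : 'rV[R]_n) (k : nat), X z ->
    let Lk := LF + eta k * LH in
    vnorm (w k - z) ^+ 2 - vnorm (x k.+1 - z) ^+ 2 >=
      (1 - lam k ^+ 2 * Lk ^+ 2) * vnorm (w k - y k) ^+ 2
      + 2 * lam k * vdot (F z) (y k - z)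
      + 2 * lam k * eta k * vdot (H z) (y k - z)
      + 2 * lam k * eta k * mu * vnorm (y k - z) ^+ 2.
Proof.
move=> monF monH LF0 LH0 lipF lipH mu0 smH _ _ cvxX _ _ cvxO sXO sOD hPX hPO _
  alpha0 lam0 eta0 _ hw hw' hy hx z k Xz.
rewrite [X in is_true X]/=.
set Lk := LF + eta k * LH.
have Xy : X (y k) by rewrite hy; case: (hPX (w k - lam k *: (F (w' k) + eta k *: H (w' k)))).
have Xx : X (x k.+1) by rewrite hx; case: (hPX (w k - lam k *: (F (y k) + eta k *: H (y k)))).
have Ow : Omega (w' k) by rewrite hw'; case: (hPO (w k)).
have [DFy DHy] := sOD _ (sXO _ Xy).
have [DFz DHz] := sOD _ (sXO _ Xz).
have [DFw DHw] := sOD _ Ow.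
have h1 := (proj_vi cvxX) hPX (w k - lam k *: (F (y k) + eta k *: H (y k))) _ Xz.
rewrite -hx in h1.
have h2 := (proj_vi cvxX) hPX (w k - lam k *: (F (w' k) + eta k *: H (w' k))) _ Xx.
rewrite -hy in h2.
have h3 := (proj_vi cvxO) hPO (w k) _ (sXO _ Xy).
rewrite -hw' in h3.
have hw3 := proj_ineq h3.
have hmon := monF _ _ DFy DFz.
have hsm := smH _ _ DHy DHz.
rewrite vnorm2 in hsm.
have hlF := lip_sq (lipF _ _ DFw DFy).
have hlH := lip_sq (lipH _ _ DHw DHy).
have hG := combo LF0 LH0 (ltW (eta0 k)) hlF hlH.
set l := lam k in h1 h2 hG *.
set e := eta k in h1 h2 hG hw3 *.
have hyg := vdot_ge0 (l *: ((F (w' k) - F (y k)) + e *: (H (w' k) - H (y k))) + (y k - x k.+1)).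
have l0 : 0 < l := lam0 k.
have e0 : 0 < e := eta0 k.
have hG' := ler_wpM2l (sqr_ge0 l) hG.
have hw3' := ler_wpM2l (mulr_ge0 (sqr_ge0 l) (sqr_ge0 Lk)) hw3.
have c1 : 0 <= 2 * l by rewrite mulr_ge0 // ltW.
have c2 : 0 <= 2 * l * e by rewrite mulr_ge0 // ltW.
have hmon' := mulr_ge0 c1 hmon.
have hsm' := ler_wpM2l c2 hsm.
rewrite !vnorm2.
move: h1 h2 hG' hw3' hmon' hsm' hyg.
rewrite !vdot_sdot !(sdotDl, sdotDr, sdotNl, sdotNr, sdotZl, sdotZr) /Lk.
move=> h1 h2 hG' hw3' hmon' hsm' hyg.
rewrite /sdot /l /e in h1 h2 hG' hw3' hmon' hsm' hyg *.
lra.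
Qed.
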